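(* Let $D\ge 3$, let $n,p\ge 0$ with $n+p\ge 2$, and let $N_1,\dots,N_n,M_1,\dots,M_p\ge0$ be integers. For $P_a\in\mathcal{H}^{(D)}_{N_a}$ and $Q_b\in\mathcal{H}^{(D)}_{M_b}$ define $$I_{n,p}(P_1,\dots,P_n,\bar Q_1,\dots,\bar Q_p)=\int_{S^{D-1}}d\Omega(x)\,P_1(x)\cdots P_n(x)\,\bar Q_1(x)\cdots\bar Q_p(x),$$ where $d\Omega$ is the rotation-invariant probability measure on the unit sphere $S^{D-1}\subset\mathbb{R}^D$. Write the arguments as $F_1,\dots,F_{n+p}$ (so $F_a=P_a$ for $a\le n$ and $F_{n+b}=\bar Q_b$). Then $I_{n,p}$ is a simple intertwiner: for any two distinct positions $a\neq b$ in $\{1,\dots,n+p\}$ and all $i,j,k,l\in\{1,\dots,D\}$, $$\sum_{\text{antisym. over }(i,j,k,l)} I_{n,p}\big(F_1,\dots,X_{ij}\cdot F_a,\dots,X_{kl}\cdot F_b,\dots,F_{n+p}\big)=0,$$ i.e. $I_{n,p}(\dots,X_{[ij}\cdot F_a,\dots,X_{kl]}\cdot F_b,\dots)=0$, where $X_{ij}$ is applied in position $a$, $X_{kl}$ in position $b$, and all other arguments are unchanged.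
   Context: $\mathcal{H}^{(D)}_N$ is the space of complex-valued harmonic homogeneous polynomials of degree $N$ on $\mathbb{R}^D$, a representation of $\mathrm{SO}(D)$ via $(g\cdot P)(x)=P(g^{-1}x)$. The Lie algebra generators $X_{ij}$ of $\mathfrak{so}(D)$ act on functions on $\mathbb{R}^D$ (including the complex conjugates $\bar Q$) by the differential operators $X_{ij}\cdot f=x_i\,\partial f/\partial x_j-x_j\,\partial f/\partial x_i$. $[ijkl]$ denotes total antisymmetrization over the four indices. (The $P_a$ correspond to incoming and the $Q_b$ to outgoing edges at a vertex of an $\mathrm{SO}(D)$ spin network; the displayed condition is the quantum intersection constraint.) *)

(* Defs.v *)
From HB Require Import structures.
From mathcomp Require Import all_boot all_order all_algebra all_fingroup.
From mathcomp Require Import mpoly.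
From mathcomp Require Import all_classical all_reals all_analysis.
From mathcomp Require Import complex.
Set Implicit Arguments. Unset Strict Implicit. Unset Printing Implicit Defensive.
Import Order.TTheory GRing.Theory Num.Theory.
Local Open Scope ring_scope.
Local Open Scope classical_set_scope.
Local Open Scope complex_scope.

Notation cpoly R D := (mpoly.mpoly D (R[i])).

Definition laplacian (R : realType) (D : nat) (P : cpoly R D) : cpoly R D :=
  \sum_(i < D) mpoly.mderiv i (mpoly.mderiv i P).

Definition harmonic_homog (R : realType) (D N : nat) (P : cpoly R D) : Prop :=
  P \is @mpoly.ishomog1 D (R[i]) N mpoly.mdeg /\ laplacian P = 0.

(* The polynomial function x |-> conj (Q x) (for real x), as a polynomial. *)
Definition cpoly_conj (R : realType) (D : nat) (Q : cpoly R D) : cpoly R D :=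
  mpoly.map_mpoly (@conjc R) Q.

Definition Xact (R : realType) (D : nat) (i j : 'I_D) (F : cpoly R D)
  : cpoly R D :=
  ('X_i : cpoly R D) * mpoly.mderiv j F
  - ('X_j : cpoly R D) * mpoly.mderiv i F.

Definition ceval (R : realType) (D : nat) (F : cpoly R D) (x : D.-tuple R) : R[i] :=
  mpoly.meval (fun i => (tnth x i)%:C) F.

Definition sphere (R : realType) (D : nat) : set (D.-tuple R) :=
  [set x | \sum_(i < D) (tnth x i) ^+ 2 = 1].

Definition mxact (R : realType) (D : nat) (g : 'M[R]_D) (x : D.-tuple R)
  : D.-tuple R :=
  [tuple \sum_(j < D) g i j * tnth x j | i < D].

Definition rot_inv_sphere_prob (R : realType) (D : nat)
  (mu : probability (D.-tuple R) R) : Prop :=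
  mu (@sphere R D) = 1%E /\
  forall g : 'M[R]_D, g *m g^T = 1%:M -> \det g = 1 ->
    forall A : set (D.-tuple R), measurable A ->
      mu (mxact g @^-1` A) = mu A.

Definition cintegral (R : realType) (D : nat) (mu : probability (D.-tuple R) R)
  (f : D.-tuple R -> R[i]) : R[i] :=
  (Rintegral mu setT (fun x => complex.Re (f x)))%:C
  + 'i * (Rintegral mu setT (fun x => complex.Im (f x)))%:C.

Definition Iint (R : realType) (D m : nat) (mu : probability (D.-tuple R) R)
  (F : 'I_m -> cpoly R D) : R[i] :=
  cintegral mu (fun x => \prod_(c < m) ceval (F c) x).

Definition args (R : realType) (D n p : nat)
  (P : 'I_n -> cpoly R D) (Q : 'I_p -> cpoly R D) : 'I_(n + p) -> cpoly R D :=
  fun c => match fintype.split c with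
           | inl a => P a
           | inr b => cpoly_conj (Q b)
           end.

Definition act2 (R : realType) (D m : nat) (F : 'I_m -> cpoly R D)
  (a b : 'I_m) (i j k l : 'I_D) : 'I_m -> cpoly R D :=
  fun c => if c == a then Xact i j (F c)
           else if c == b then Xact k l (F c) else F c.

Definition idx4 (D : nat) (i j k l : 'I_D) : 'I_4 -> 'I_D :=
  fun t => nth i [:: i; j; k; l] t.

(* Main.v *)
Require Import Defs.
From HB Require Import structures.
From mathcomp Require Import all_boot all_order all_algebra all_fingroup.
From mathcomp Require Import mpoly.
From mathcomp Require Import all_classical all_reals all_analysis.
From mathcomp Require Import complex.
From mathcomp Require Import ring lra.
From mathcomp Require Import measurable_realfun.
Import Order.TTheory GRing.Theory Num.Theory.
Local Open Scope ring_scope.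
Local Open Scope complex_scope.
Local Open Scope classical_set_scope.

Lemma sum_perm_shift (C : comRingType) (t : 'S_4) (H : 'S_4 -> C) :
  \sum_(s : 'S_4) (-1) ^+ s * H (t * s)%g = (-1) ^+ t * \sum_(s : 'S_4) (-1) ^+ s * H s.
Proof.
rewrite (reindex_inj (mulgI t^-1)%g) /= mulr_sumr; apply: eq_bigr => s _.
by rewrite mulKVg odd_permM odd_permV signr_addb mulrA.
Qed.

Arguments sum_perm_shift {C}.
Definition t01 : 'S_4 := tperm (0 : 'I_4) 1.
Definition t23 : 'S_4 := tperm (2 : 'I_4) 3.
Definition t02 : 'S_4 := tperm (0 : 'I_4) 2.

Lemma alt_zero (C : numFieldType) (U F G : 'I_4 -> C) :
 \sum_(s : 'S_4) (-1)^+ s * ((U (s 0) * F (s 1) - U (s 1) * F (s 0)) *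
                            (U (s 2) * G (s 3) - U (s 3) * G (s 2))) = 0.
Proof.
pose A (s : 'S_4) := U (s 0) * F (s 1) * U (s 2) * G (s 3).
have A0 : \sum_(s : 'S_4) (-1)^+ s * A s = 0.
  have := sum_perm_shift t02 A.
  have -> : odd_perm t02 = true by rewrite odd_tperm.
  rewrite expr1 mulN1r.
  rewrite (eq_bigr (fun s : 'S_4 => (-1)^+ s * A s)); last first.
    move=> s _; rewrite /A !permM /t02 !permE /=; congr (_ * _).
    move: (U (s 0)) (U (s 2)) (F (s 1)) (G (s 3)) => u0 u2 f1 g3; ring.
  move/eqP; rewrite -subr_eq0 opprK -mulr2n mulrn_eq0 /=; by move/eqP.
rewrite (eq_bigr (fun s : 'S_4 => (-1)^+s*A s - (-1)^+s * A (t23*s)%g - (-1)^+s * A(t01*s)%g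
     + (-1)^+s * (fun s : 'S_4 => A (t01 * s)%g) (t23*s)%g)); last first.
  move=> s _; rewrite /A !permM /t01 /t23 !permE /=.
  rewrite -!mulrBr -mulrDr; congr (_ * _).
  move: (U (s 0)) (U (s 1)) (U (s 2)) (U (s 3)) (F (s 0)) (F (s 1)) (G (s 2)) (G (s 3)) => u0 u1 u2 u3 f0 f1 g2 g3; ring.
rewrite big_split /= !sumrB.
have -> : \sum_(i : 'S_4) (-1)^+i * A (t01 * (t23 * i))%g = (-1)^+t23 * \sum_(i : 'S_4) (-1)^+ i * A (t01 * i)%g
  := sum_perm_shift t23 (fun s => A (t01 * s)%g).
have -> : \sum_(i : 'S_4) (-1)^+i * A (t01 * i)%g = (-1)^+t01 * \sum_(i : 'S_4) (-1)^+ i * A i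
  := sum_perm_shift t01 A.
have -> : \sum_(i : 'S_4) (-1)^+i * A (t23 * i)%g = (-1)^+t23 * \sum_(i : 'S_4) (-1)^+ i * A i
  := sum_perm_shift t23 A.
by rewrite A0 !mulr0 !subr0 addr0.
Qed.

Lemma ceval_Xact (R : realType) (D : nat) (i j : 'I_D) (G : cpoly R D) x :
  ceval (Xact i j G) x = (tnth x i)%:C * ceval (mpoly.mderiv j G) x
                         - (tnth x j)%:C * ceval (mpoly.mderiv i G) x.
Proof. by rewrite /ceval /Xact mevalB !mevalM !mevalXU. Qed.

Lemma pointwise (R : realType) (D m : nat) (F : 'I_m -> cpoly R D) (a b : 'I_m)
  (hab : a != b) (i j k l : 'I_D) x :
  \sum_(s : 'S_4) (-1) ^+ s *
     \prod_(c < m) ceval (act2 F a b (idx4 i j k l (s 0)) (idx4 i j k l (s 1))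
                 (idx4 i j k l (s 2)) (idx4 i j k l (s 3)) c) x = 0.
Proof.
set w := idx4 i j k l.
set r := \prod_(c < m | (c != a) && (c != b)) ceval (F c) x.
pose u t := (tnth x (w t))%:C.
pose fa t := ceval (mpoly.mderiv (w t) (F a)) x.
pose fb t := ceval (mpoly.mderiv (w t) (F b)) x.
have hba : (b == a) = false by apply/negbTE; rewrite eq_sym.
rewrite (eq_bigr (fun s : 'S_4 => (-1)^+ s * ((u (s 0) * fa (s 1) - u (s 1) * fa (s 0)) *
                            (u (s 2) * fb (s 3) - u (s 3) * fb (s 2))) * r)).
  by rewrite -big_distrl /= alt_zero mul0r.
move=> s _; rewrite (bigD1 a) //= (bigD1 b) /=; last by rewrite hba.
rewrite /act2 eqxx hba eqxx !ceval_Xact -!mulrA; congr (_ * (_ * (_ * _))).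
rewrite /r; apply: eq_bigr => c /andP[ca cb]; by rewrite (negbTE ca) (negbTE cb).
Qed.

Section An.
Variables (R : realType) (D : nat).
Notation T := (D.-tuple R).

Lemma ReD (x y : R[i]) : complex.Re (x + y) = complex.Re x + complex.Re y.
Proof. by case: x => a b; case: y => c d. Qed.
Lemma ImD (x y : R[i]) : complex.Im (x + y) = complex.Im x + complex.Im y.
Proof. by case: x => a b; case: y => c d. Qed.
Lemma ReM (x y : R[i]) : complex.Re (x * y) = complex.Re x * complex.Re y - complex.Im x * complex.Im y.
Proof. by case: x => a b; case: y => c d. Qed.
Lemma ImM (x y : R[i]) : complex.Im (x * y) = complex.Re x * complex.Im y + complex.Im x * complex.Re y.
Proof. by case: x => a b; case: y => c d /=; rewrite addrC. Qed.

Definition good (f : T -> R[i]) : Prop :=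
  measurable_fun setT (fun x => complex.Re (f x)) /\
  measurable_fun setT (fun x => complex.Im (f x)) /\
  exists C : R, 0 <= C /\ forall x, sphere x ->
     `|complex.Re (f x)| <= C /\ `|complex.Im (f x)| <= C.

Lemma sphere_coord (x : T) (i : 'I_D) : sphere x -> `|tnth x i| <= 1.
Proof.
move=> Sx; have h : tnth x i ^+ 2 <= 1.
  rewrite -Sx (bigD1 i) //= lerDl; apply: sumr_ge0 => ? _; exact: sqr_ge0.
rewrite ler_norml; apply/andP; split; nra.
Qed.

Lemma good_cst c : good (fun _ => c).
Proof.
split; first exact: measurable_cst.
split; first exact: measurable_cst.
exists (`|complex.Re c| + `|complex.Im c|); split; first by rewrite addr_ge0.
by move=> x _; rewrite lerDl lerDr !normr_ge0.
Qed.

Lemma good_coord (i : 'I_D) : good (fun x => (tnth x i)%:C).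
Proof.
split; first exact: measurable_tnth.
split; first exact: measurable_cst.
exists 1; split => // x Sx; split; first exact: sphere_coord.
by rewrite /= normr0.
Qed.

Lemma good_add f g : good f -> good g -> good (fun x => f x + g x).
Proof.
move=> [mf1 [mf2 [C1 [C10 hf]]]] [mg1 [mg2 [C2 [C20 hg]]]].
split.
  have -> : (fun x => complex.Re (f x + g x)) = (fun x => complex.Re (f x)) \+ (fun x => complex.Re (g x)).
    by apply/funext => x; rewrite ReD.
  exact: measurable_realfun.measurable_funD.
split.
  have -> : (fun x => complex.Im (f x + g x)) = (fun x => complex.Im (f x)) \+ (fun x => complex.Im (g x)).
    by apply/funext => x; rewrite ImD.
  exact: measurable_realfun.measurable_funD.
exists (C1 + C2); split; first by rewrite addr_ge0.
move=> x Sx; have [h1 h2] := hf x Sx; have [h3 h4] := hg x Sx.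
rewrite ReD ImD; split; apply: le_trans (ler_normD _ _) _; exact: lerD.
Qed.

Lemma good_mul f g : good f -> good g -> good (fun x => f x * g x).
Proof.
move=> [mf1 [mf2 [C1 [C10 hf]]]] [mg1 [mg2 [C2 [C20 hg]]]].
split.
  have -> : (fun x => complex.Re (f x * g x)) =
    ((fun x => complex.Re (f x)) \* (fun x => complex.Re (g x))) \-
    ((fun x => complex.Im (f x)) \* (fun x => complex.Im (g x))).
    by apply/funext => x; rewrite ReM.
  by apply: measurable_realfun.measurable_funB; apply: measurable_realfun.measurable_funM.
split.
  have -> : (fun x => complex.Im (f x * g x)) =
    ((fun x => complex.Re (f x)) \* (fun x => complex.Im (g x))) \+
    ((fun x => complex.Im (f x)) \* (fun x => complex.Re (g x))).
    by apply/funext => x; rewrite ImM.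
  by apply: measurable_realfun.measurable_funD; apply: measurable_realfun.measurable_funM.
exists (C1 * C2 + C1 * C2); split; first by rewrite addr_ge0 // mulr_ge0.
move=> x Sx; have [h1 h2] := hf x Sx; have [h3 h4] := hg x Sx.
rewrite ReM ImM; split.
  apply: le_trans (ler_normB _ _) _; rewrite !normrM; apply: lerD; exact: ler_pM.
apply: le_trans (ler_normD _ _) _; rewrite !normrM; apply: lerD; exact: ler_pM.
Qed.

Lemma good_sum (I : Type) (r : seq I) (h : I -> T -> R[i]) :
  (forall i, good (h i)) -> good (fun x => \sum_(i <- r) h i x).
Proof.
move=> hh; elim: r => [|i r IH].
  under eq_fun do rewrite big_nil; exact: good_cst.
under eq_fun do rewrite big_cons; exact: good_add.
Qed.

Lemma good_prod (I : Type) (r : seq I) (h : I -> T -> R[i]) :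
  (forall i, good (h i)) -> good (fun x => \prod_(i <- r) h i x).
Proof.
move=> hh; elim: r => [|i r IH].
  under eq_fun do rewrite big_nil; exact: good_cst.
under eq_fun do rewrite big_cons; exact: good_mul.
Qed.

Lemma good_exp f n : good f -> good (fun x => f x ^+ n).
Proof.
move=> hf; elim: n => [|n IH].
  under eq_fun do rewrite expr0; exact: good_cst.
under eq_fun do rewrite exprS; exact: good_mul.
Qed.

Lemma good_ceval (G : cpoly R D) : good (ceval G).
Proof.
have -> : ceval G = fun x => \sum_(m <- mpoly.msupp G)
    G@_m * \prod_(i < D) (tnth x i)%:C ^+ (m i).
  by apply/funext => x; rewrite /ceval mpoly.mevalE.
apply: good_sum => m; apply: good_mul; first exact: good_cst.
apply: good_prod => i; apply: good_exp; exact: good_coord.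
Qed.


Lemma measurable_sphere : measurable (@sphere R D).
Proof.
have mf : measurable_fun setT (fun x : T => \sum_(i < D) tnth x i ^+ 2).
  apply: measurable_sum => i; apply: measurable_realfun.measurable_funX; exact: measurable_tnth.
have := mf measurableT [set 1] (measurable_set1 1); rewrite setTI.
by [].
Qed.

Variable mu : probability T R.
Hypothesis hS : mu (@sphere R D) = 1%E.

Lemma int_of (g : T -> R) : measurable_fun setT g ->
  (exists C, forall x, sphere x -> `|g x| <= C) -> mu.-integrable setT (EFin \o g).
Proof.
move=> mg [C hC].
have mS := measurable_sphere.
have mE : measurable_fun setT (EFin \o g) by exact/measurable_realfun.measurable_EFinP.
have hN : mu (~` (@sphere R D)) = 0%E by rewrite probability_setC // hS subee.
apply/(negligible_integrable (measurableC mS) measurableT mE hN).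
rewrite setTD setCK; apply: measurable_bounded_integrable => //.
- rewrite [X in (X < _)%E](_ : _ = 1%E); [exact: ltry | exact: hS].
- exact: measurable_funS mg.
exists C; split; first exact: num_real.
by move=> M /ltW CM x Sx /=; apply: le_trans (hC x Sx) CM.
Qed.


Lemma good_intRe f : good f -> mu.-integrable setT (EFin \o (fun x => complex.Re (f x))).
Proof.
move=> [m1 [m2 [C [_ hC]]]]; apply: int_of => //; exists C => x Sx; by case: (hC x Sx).
Qed.

Lemma good_intIm f : good f -> mu.-integrable setT (EFin \o (fun x => complex.Im (f x))).
Proof.
move=> [m1 [m2 [C [_ hC]]]]; apply: int_of => //; exists C => x Sx; by case: (hC x Sx).
Qed.

Lemma int_scale (h : T -> R) a : mu.-integrable setT (EFin \o h) ->
  mu.-integrable setT (EFin \o (fun x => a * h x)).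
Proof.
move=> ih; have := integrableZl measurableT a ih.
by apply: eq_integrable => // x _ /=; rewrite EFinM.
Qed.

Lemma cint_lin c f g : good f -> good g ->
  cintegral mu (fun x => c * f x + g x) = c * cintegral mu f + cintegral mu g.
Proof.
move=> gf gg.
have gcf : good (fun x => c * f x) by apply: good_mul => //; exact: good_cst.
rewrite /cintegral.
have e1 : Rintegral mu setT (fun x => complex.Re (c * f x + g x)) =
   complex.Re c * Rintegral mu setT (fun x => complex.Re (f x))
   - complex.Im c * Rintegral mu setT (fun x => complex.Im (f x))
   + Rintegral mu setT (fun x => complex.Re (g x)).
  rewrite (@eq_Rintegral _ _ _ mu setT (fun x => complex.Re (c * f x) + complex.Re (g x))); last first.
    by move=> x _; rewrite ReD.
  rewrite RintegralD //; [|exact: good_intRe gcf|exact: good_intRe gg].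
  rewrite (@eq_Rintegral _ _ _ mu setT
    (fun x => complex.Re c * complex.Re (f x) - complex.Im c * complex.Im (f x)) (fun x => complex.Re (c * f x))); last first.
    by move=> x _; rewrite ReM.
  rewrite RintegralB //; [|apply: int_scale; exact: good_intRe|apply: int_scale; exact: good_intIm].
  by rewrite !RintegralZl //; [exact: good_intIm|exact: good_intRe].
have e2 : Rintegral mu setT (fun x => complex.Im (c * f x + g x)) =
   complex.Re c * Rintegral mu setT (fun x => complex.Im (f x))
   + complex.Im c * Rintegral mu setT (fun x => complex.Re (f x))
   + Rintegral mu setT (fun x => complex.Im (g x)).
  rewrite (@eq_Rintegral _ _ _ mu setT (fun x => complex.Im (c * f x) + complex.Im (g x))); last first.
    by move=> x _; rewrite ImD.
  rewrite RintegralD //; [|exact: good_intIm gcf|exact: good_intIm gg].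
  rewrite (@eq_Rintegral _ _ _ mu setT
    (fun x => complex.Re c * complex.Im (f x) + complex.Im c * complex.Re (f x)) (fun x => complex.Im (c * f x))); last first.
    by move=> x _; rewrite ImM.
  rewrite RintegralD //; [|apply: int_scale; exact: good_intIm|apply: int_scale; exact: good_intRe].
  by rewrite !RintegralZl //; [exact: good_intRe|exact: good_intIm].
rewrite e1 e2.
move: (Rintegral _ _ (fun x => complex.Re (f x))) (Rintegral _ _ (fun x => complex.Im (f x)))
  (Rintegral _ _ (fun x => complex.Re (g x))) (Rintegral _ _ (fun x => complex.Im (g x))) => A B E G.
clear gcf e1 e2; case: c => a b /=; apply/eqP; rewrite eq_complex /=; apply/andP; split; apply/eqP; ring.
Qed.

Lemma cint0 : cintegral mu (fun _ => 0) = 0.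
Proof.
rewrite /cintegral /= Rintegral_cst // mul0r.
apply/eqP; rewrite eq_complex /=; apply/andP; split; apply/eqP; ring.
Qed.

Lemma cint_sum (I : Type) (r : seq I) (c : I -> R[i]) (h : I -> T -> R[i]) :
  (forall i, good (h i)) ->
  \sum_(i <- r) c i * cintegral mu (h i) = cintegral mu (fun x => \sum_(i <- r) c i * h i x).
Proof.
move=> gh; elim: r => [|i r IH].
  rewrite big_nil; under eq_fun do rewrite big_nil; by rewrite cint0.
rewrite big_cons IH -cint_lin //; last first.
  apply: good_sum => j; apply: good_mul => //; exact: good_cst.
by under [in RHS]eq_fun do rewrite big_cons.
Qed.

End An.

Theorem theorem3 (R : realType) (D n p : nat)
  (N : 'I_n -> nat) (M : 'I_p -> nat)
  (P : 'I_n -> cpoly R D) (Q : 'I_p -> cpoly R D)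
  (mu : probability (D.-tuple R) R) :
  (3 <= D)%N -> (2 <= n + p)%N ->
  rot_inv_sphere_prob mu ->
  (forall a, harmonic_homog (N a) (P a)) ->
  (forall b, harmonic_homog (M b) (Q b)) ->
  forall (a b : 'I_(n + p)), a != b ->
  forall i j k l : 'I_D,
    \sum_(s : 'S_4)
      (-1) ^+ s *
      Iint mu (act2 (args P Q) a b
                 (idx4 i j k l (s 0)) (idx4 i j k l (s 1))
                 (idx4 i j k l (s 2)) (idx4 i j k l (s 3))) = 0.
Proof.
move=> _ _ [hS _] _ _ a b hab i j k l.
rewrite /Iint.
pose h := fun (s : 'S_4) (x : D.-tuple R) => \prod_(c < n + p)
   ceval (act2 (args P Q) a b (idx4 i j k l (s 0)) (idx4 i j k l (s 1))
                 (idx4 i j k l (s 2)) (idx4 i j k l (s 3)) c) x.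
have gh : forall s, @good R D (h s).
  move=> s; apply: good_prod => c; exact: good_ceval.
have := @cint_sum R D mu hS _ (index_enum {perm 'I_4}) (fun s => (-1)^+ s) h gh.
rewrite /h /= => ->.
under eq_fun do rewrite (@pointwise R D _ _ a b hab).
exact: cint0.
Qed.
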